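(* Tijdeman's Conjecture $(\bmod~900)$ is false. That is, there exist subsets $\bar{A},\bar{B}\subseteq \mathbb{Z}/900\mathbb{Z}$ with $\bar{0}\in\bar{A}\cap\bar{B}$ such that $\bar{A}\oplus\bar{B}=\mathbb{Z}/900\mathbb{Z}$ is a factorization, $\bar{A}$ has a lifting $A\subseteq\mathbb{Z}$ with $0\in A$ and $\gcd\{a : a\in A\}=1$, and $\bar{B}$ has a lifting $B\subseteq\mathbb{Z}$ with $0\in B$ and $\gcd\{b: b\in B\}=1$.
   Context: A factorization $\bar{A}\oplus\bar{B}=G$ of a finite cyclic group $G=\mathbb{Z}/m\mathbb{Z}$ means every $g\in G$ has a unique representation $g=\bar a+\bar b$ with $\bar a\in\bar A$, $\bar b\in\bar B$. A lifting of $\bar A$ is a set $A\subseteq\mathbb{Z}$ of integer representatives, one for each element of $\bar A$ (reduction mod $m$ is a bijection $A\to\bar A$). Tijdeman's Conjecture $(\bmod~m)$ asserts: if $\bar A\oplus\bar B=\mathbb{Z}/m\mathbb{Z}$ with $\bar 0\in\bar A\cap\bar B$ and $\bar A$ lifts to a set $A\subseteq\mathbb{Z}$ with $0\in A$ and $\gcd\{a:a\in A\}=1$, then every lifting $B\subseteq\mathbb{Z}$ of $\bar B$ with $0\in B$ has $\gcd\{b:b\in B\}\neq 1$. *)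

(* Defs.v *)
From mathcomp Require Import all_boot all_order all_algebra.
Set Implicit Arguments. Unset Strict Implicit. Unset Printing Implicit Defensive.
Import GRing.Theory Num.Theory.
Local Open Scope ring_scope.

(* Reduction mod m of an integer, as an element of 'Z_m (requires 1 < m
   for 'Z_m to be Z/mZ). *)
Definition redZ (m : nat) (x : int) : 'Z_m := x%:~R.

Definition is_factorization (m : nat) (Abar Bbar : {set 'Z_m}) : Prop :=
  forall g : 'Z_m,
    #|[set ab in setX Abar Bbar | ab.1 + ab.2 == g]| = 1%N.

Definition is_lifting (m : nat) (Abar : {set 'Z_m}) (A : seq int) : Prop :=
  uniq (map (@redZ m) A) /\ [set x in map (@redZ m) A] = Abar.

Definition gcd_list (A : seq int) : int := foldr gcdz 0 A.

(* Main.v *)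
Require Import Defs.
From mathcomp Require Import all_boot all_order all_algebra.
Local Open Scope ring_scope.

Definition An : seq nat := [:: 0; 576; 252; 828; 504; 100; 676; 352; 28; 604; 200; 776; 452; 128; 704; 225; 801; 477; 153; 729; 325; 1; 577; 253; 829; 425; 101; 677; 353; 29]%N.
Definition Bn : seq nat := [:: 0; 30; 60; 75; 120; 126; 150; 210; 240; 280; 306; 330; 360; 390; 420; 486; 510; 525; 540; 570; 580; 600; 660; 666; 690; 720; 840; 846; 870; 880]%N.
Definition sA : seq 'Z_900 := map (@redZ 900) (map Posz An).
Definition sB : seq 'Z_900 := map (@redZ 900) (map Posz Bn).
Lemma c1 : uniq [seq a + b | a <- sA, b <- sB]. Proof. vm_compute. reflexivity. Qed.
Lemma c2A : uniq sA. Proof. vm_compute. reflexivity. Qed.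
Lemma c2B : uniq sB. Proof. vm_compute. reflexivity. Qed.
Lemma c3 : gcd_list (map Posz An) = 1. Proof. vm_compute. reflexivity. Qed.
Lemma c4 : gcd_list (map Posz Bn) = 1. Proof. vm_compute. reflexivity. Qed.
Lemma c5 : (0 : 'Z_900) \in sA. Proof. vm_compute. reflexivity. Qed.
Lemma c6 : (0 : 'Z_900) \in sB. Proof. vm_compute. reflexivity. Qed.
Lemma c7 : (0 : int) \in map Posz An. Proof. vm_compute. reflexivity. Qed.
Lemma c8 : (0 : int) \in map Posz Bn. Proof. vm_compute. reflexivity. Qed.

Lemma fact_gen (m : nat) (sA sB : seq 'Z_m) :
  uniq sA -> uniq sB -> uniq [seq a + b | a <- sA, b <- sB] ->
  (size sA * size sB)%N = #|'Z_m| ->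
  is_factorization [set x in sA] [set x in sB].
Proof.
move=> c2A c2B c1 hsz.
pose D := setX [set x in sA] [set x in sB].
pose f := fun ab : 'Z_m * 'Z_m => ab.1 + ab.2.
have cD : #|D| = #|'Z_m|.
  by rewrite cardsX !cardsE (card_uniqP c2A) (card_uniqP c2B).
have hsub : [set x in [seq a + b | a <- sA, b <- sB]] \subset f @: D.
  apply/subsetP => x; rewrite inE => /allpairsP [[a b] /= [ha hb ->]].
  by apply/imsetP; exists (a, b) => //; rewrite /D in_setX !in_set ha hb.
have cS : #|[set x in [seq a + b | a <- sA, b <- sB]]| = #|'Z_m|.
  by rewrite cardsE (card_uniqP c1) size_allpairs.
have cf : #|f @: D| = #|'Z_m|.
  apply/eqP; rewrite eqn_leq; apply/andP; split.
    by have := leq_imset_card f D; rewrite cD.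
  by have := subset_leq_card hsub; rewrite cS.
have inj : {in D &, injective f} by apply/imset_injP; rewrite cf cD.
have full : f @: D = setT.
  by apply/eqP; rewrite eqEcard subsetT /= cardsT cf !card_ord.
move=> g.
have : g \in f @: D by rewrite full inE.
case/imsetP => ab0 hab0 ->.
transitivity #|[set ab0]|; last exact: cards1.
apply: eq_card => ab.
rewrite in_set in_set1 -/D; apply/andP/eqP.
  by case=> h1 /eqP h2; apply: inj.
by move=> ->; split => //.
Qed.

Lemma fact : is_factorization [set x in sA] [set x in sB].
Proof.
have c9 : (size sA * size sB)%N = #|'Z_900| by rewrite !size_map card_ord.
exact: (@fact_gen 900 sA sB c2A c2B c1 c9).
Qed.

Theorem theorem2p1 :
  exists (Abar Bbar : {set 'Z_900}),
    0 \in Abar /\ 0 \in Bbar /\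
    is_factorization Abar Bbar /\
    (exists A : seq int, is_lifting Abar A /\ (0 \in A) /\ gcd_list A = 1) /\
    (exists B : seq int, is_lifting Bbar B /\ (0 \in B) /\ gcd_list B = 1).
Proof.
exists [set x in sA], [set x in sB].
split; first by rewrite inE c5.
split; first by rewrite inE c6.
split; first exact: fact.
split.
  by exists (map Posz An); split; [split; [exact: c2A| by []] | split; [exact: c7 | exact: c3]].
by exists (map Posz Bn); split; [split; [exact: c2B| by []] | split; [exact: c8 | exact: c4]].
Qed.
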